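(* Let $X\subset A^+$ be a thin maximal bifix code and let $x\in A^{\mathbb N}$ be an $X$-stable infinite word. If $\mathrm{Card}(X\cap F(x))\le d_{F(x)}(X)$, then $x$ is ultimately periodic.
   Context: $A$ is a finite alphabet. A bifix code is a set of nonempty words none of which is a proper prefix or proper suffix of another; a maximal bifix code is one not properly contained in another bifix code of $A^*$; it is thin if some word of $A^*$ is not a factor of any of its words. For an infinite word $y$, $F(y)$ is its set of finite factors. A parse of $w$ with respect to $X$ is a triple $(v,z,u)$ with $w=vzu$, $v$ having no suffix in $X$, $z\in X^*$, $u$ having no prefix in $X$; $\delta_X(w)$ is their number, and $d_{F(y)}(X)=\max_{w\in F(y)}\delta_X(w)$. An infinite word $x$ is $X$-stable if $d_{F(y)}(X)=d_{F(x)}(X)$ for every suffix $y$ of $x$ (i.e. every $y$ with $x=uy$, $u\in A^*$). $x=a_0a_1\cdots$ is ultimately periodic if there is $n\ge1$ with $a_{i+n}=a_i$ for all sufficiently large $i$. *)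

(* Defs.v *)
From mathcomp Require Import all_boot.
Set Implicit Arguments. Unset Strict Implicit. Unset Printing Implicit Defensive.

Section Words.
Variable A : finType.
Notation word := (seq A).

Definition bifix_code (X : pred word) : Prop :=
  (forall u, X u -> u != [::]) /\
  (forall u v, X u -> X v -> prefix u v -> u = v) /\
  (forall u v, X u -> X v -> suffix u v -> u = v).

Definition maximal_bifix_code (X : pred word) : Prop :=
  bifix_code X /\
  (forall Y : pred word, bifix_code Y -> (forall u, X u -> Y u) -> forall u, Y u -> X u).

Definition thin (X : pred word) : Prop :=
  exists w : word, forall u, X u -> ~~ infix w u.

(* membership in X^* (fuel = size z suffices since each factor is nonempty) *)
Fixpoint in_star_aux (X : pred word) (n : nat) (z : word) : bool :=
  match n with
  | 0 => z == [::]
  | n'.+1 => (z == [::]) ||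
      has (fun k => X (take k z) && in_star_aux X n' (drop k z)) (iota 1 (size z))
  end.
Definition in_star (X : pred word) (z : word) : bool := in_star_aux X (size z) z.

Definition no_suffix_in (X : pred word) (v : word) : bool :=
  ~~ has (fun k => X (drop k v)) (iota 0 (size v).+1).
Definition no_prefix_in (X : pred word) (u : word) : bool :=
  ~~ has (fun k => X (take k u)) (iota 0 (size u).+1).

(* parse (v,z,u) of w: w = v z u, encoded by the cut points i <= j *)
Definition is_parse (X : pred word) (w : word) (ij : nat * nat) : bool :=
  let v := take ij.1 w in
  let z := drop ij.1 (take ij.2 w) in
  let u := drop ij.2 w in
  [&& no_suffix_in X v, in_star X z & no_prefix_in X u].

Definition cuts (w : word) : seq (nat * nat) :=
  [seq (i, j) | i <- iota 0 (size w).+1, j <- iota i ((size w).+1 - i)].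

Definition delta (X : pred word) (w : word) : nat := count (is_parse X w) (cuts w).

Definition factor (x : nat -> A) (w : word) : Prop :=
  exists i, w = mkseq (fun k => x (i + k)) (size w).

Definition is_dF (F : word -> Prop) (X : pred word) (d : nat) : Prop :=
  (exists w, F w /\ delta X w = d) /\ (forall w, F w -> delta X w <= d).

Definition shift (x : nat -> A) (m : nat) : nat -> A := fun n => x (m + n).

Definition stable (X : pred word) (x : nat -> A) : Prop :=
  forall m d, is_dF (factor (shift x m)) X d <-> is_dF (factor x) X d.

Definition card_le (P : word -> Prop) (d : nat) : Prop :=
  exists s : seq word, size s <= d /\ forall w, P w -> w \in s.

Definition ultimately_periodic (x : nat -> A) : Prop :=
  exists n, 0 < n /\ exists N, forall i, N <= i -> x (i + n) = x i.

End Words.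

(* Main.v *)
Require Import Defs.
From mathcomp Require Import all_boot.
From Stdlib Require Import Lia Classical.
Set Implicit Arguments. Unset Strict Implicit. Unset Printing Implicit Defensive.

Ltac slia := repeat (match goal with H : is_true (_ <= _) |- _ => apply (elimT leP) in H | H : is_true (_ < _) |- _ => apply (elimT ltP) in H end);
  try (match goal with |- is_true (_ <= _) => apply (introT leP) | |- is_true (_ < _) => apply (introT ltP) end);
  unfold addn, subn, muln in *; lia.

Section Parse.
Variable A : finType.
Variable X : pred (seq A).
Hypothesis Xne : forall u, X u -> u != [::].
Hypothesis Xpre : forall u v, X u -> X v -> prefix u v -> u = v.

Lemma in_star_fuel n m z : size z <= n -> size z <= m ->
  in_star_aux X n z = in_star_aux X m z.
Proof.
elim: n m z => [|n IH] [|m] z /= Hn Hm //.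
- by move: Hn; rewrite leqn0 => /nilP ->.
- by move: Hm; rewrite leqn0 => /nilP ->.
- congr (_ || _); apply: eq_in_has => k; rewrite mem_iota => /andP [Hk1 Hk2].
  congr (_ && _); apply: IH; rewrite size_drop leq_subLR.
  + by apply: leq_trans Hn _; rewrite -add1n leq_add2r.
  + by apply: leq_trans Hm _; rewrite -add1n leq_add2r.
Qed.

Lemma in_starE z : in_star X z =
  (z == [::]) || has (fun k => X (take k z) && in_star X (drop k z)) (iota 1 (size z)).
Proof.
rewrite /in_star; case: z => [|a z] //.
change ((a::z == [::]) || has (fun k => X (take k (a::z)) && in_star_aux X (size z) (drop k (a::z))) (iota 1 (size (a::z))) = (a::z == [::]) || has (fun k => X (take k (a::z)) && in_star_aux X (size (drop k (a::z))) (drop k (a::z))) (iota 1 (size (a::z)))).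
congr (_ || _); apply: eq_in_has => k; rewrite mem_iota => /andP [Hk1 Hk2].
congr (_ && _); apply: in_star_fuel => //.
rewrite size_drop /=; case: k Hk1 {Hk2} => // k _.
by rewrite subSS leq_subr.
Qed.

Lemma Xtake_eq y k1 k2 : X (take k1 y) -> X (take k2 y) -> k1 <= size y -> k2 <= size y -> k1 = k2.
Proof.
wlog le12 : k1 k2 / k1 <= k2.
  move=> H H1 H2 s1 s2; case: (leqP k1 k2) => h; first exact: H.
  by symmetry; apply: H => //; apply: ltnW.
move=> H1 H2 s1 s2.
have : take k1 y = take k2 y.
  apply: Xpre => //; rewrite prefixE size_take.
  rewrite (_ : (if k1 < size y then k1 else size y) = k1); last first.
    by case: ifP => // /negbT; rewrite -leqNgt => h; apply/eqP; rewrite eqn_leq s1 h.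
  by rewrite take_takel.
by move/(congr1 size); rewrite !size_takel.
Qed.

Lemma no_prefixP u : no_prefix_in X u = false -> exists2 k, 0 < k <= size u & X (take k u).
Proof.
rewrite /no_prefix_in => /negbFE /hasP [k]; rewrite mem_iota add0n ltnS => /andP [_ Hk] Xk.
exists k => //; rewrite Hk andbT lt0n; apply/negP => /eqP k0; move: Xk; rewrite k0 take0.
by move=> /Xne.
Qed.

Lemma no_prefix_take u k : no_prefix_in X u -> k <= size u -> ~~ X (take k u).
Proof.
move=> H Hk; apply/negP => Xk; move: H; rewrite /no_prefix_in => /hasPn /(_ k).
by rewrite mem_iota add0n ltnS Hk Xk => /(_ isT).
Qed.

Lemma star_nonempty z : in_star X z -> z != [::] ->
  exists2 k, 0 < k <= size z & X (take k z) && in_star X (drop k z).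
Proof.
rewrite in_starE => /orP [/eqP -> //|/hasP [k]]; rewrite mem_iota => /andP [H1 H2] H _.
exists k => //; rewrite H1 /=; by rewrite add1n ltnS in H2.
Qed.

Lemma parse_unique y j1 j2 : j1 <= size y -> j2 <= size y ->
  in_star X (take j1 y) -> no_prefix_in X (drop j1 y) ->
  in_star X (take j2 y) -> no_prefix_in X (drop j2 y) -> j1 = j2.
Proof.
elim: {y} (size y) {-2}y (leqnn (size y)) j1 j2 => [|n IH] y Hy j1 j2.
  by move: Hy; rewrite leqn0 => /eqP ->; rewrite !leqn0 => /eqP -> /eqP ->.
move=> s1 s2 S1 P1 S2 P2.
have key : forall j, 0 < j -> j <= size y -> in_star X (take j y) ->
    exists2 k, 0 < k <= j & X (take k y) && in_star X (take (j - k) (drop k y)).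
  move=> j j0 js S; case: (star_nonempty S).
    by rewrite -size_eq0 size_take; case: ifP => _; rewrite -lt0n // (leq_trans j0 js).
  move=> k /andP [k0 kj] /andP [Xk Sk]; rewrite size_take in kj.
  have kj' : k <= j by move: kj; case: ifP => // /negbT; rewrite -leqNgt => h h2; apply: leq_trans h2 h.
  exists k; first by rewrite k0.
  by rewrite take_takel // in Xk; rewrite Xk /= take_drop subnK.
case: (posnP j1) => [j10|j1p]; case: (posnP j2) => [j20|j2p]; first by rewrite j10 j20.
- case: (key j2 j2p s2 S2) => k /andP [k0 kj] /andP [Xk _].
  move: P1; rewrite j10 drop0 => P1.
  by move: (no_prefix_take P1 (leq_trans kj s2)); rewrite Xk.
- case: (key j1 j1p s1 S1) => k /andP [k0 kj] /andP [Xk _].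
  move: P2; rewrite j20 drop0 => P2.
  by move: (no_prefix_take P2 (leq_trans kj s1)); rewrite Xk.
case: (key j1 j1p s1 S1) => k1 /andP [k10 kj1] /andP [Xk1 Sk1].
case: (key j2 j2p s2 S2) => k2 /andP [k20 kj2] /andP [Xk2 Sk2].
have e12 : k1 = k2 by apply: (Xtake_eq Xk1 Xk2); [apply: leq_trans kj1 s1|apply: leq_trans kj2 s2].
subst k2.
have : j1 - k1 = j2 - k1.
  apply: (IH (drop k1 y)).
  - by rewrite size_drop leq_subLR; apply: leq_trans Hy _; rewrite -add1n leq_add2r.
  - by rewrite size_drop leq_sub2r.
  - by rewrite size_drop leq_sub2r.
  - by [].
  - by rewrite drop_drop subnK.
  - by [].
  - by rewrite drop_drop subnK.
by move/(congr1 (addn^~ k1)); rewrite !subnK.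
Qed.

Lemma parse_exists y : exists2 j, j <= size y & in_star X (take j y) && no_prefix_in X (drop j y).
Proof.
have [n] := ubnP (size y); elim: n y => // n IH y Hy.
case P: (no_prefix_in X y).
  by exists 0 => //; rewrite take0 drop0 P andbT.
case: (no_prefixP P) => k /andP [k0 ky] Xk.
case: (IH (drop k y)).
  by rewrite size_drop ltn_subLR // (leq_trans Hy) // -add1n leq_add2r.
move=> j; rewrite size_drop => js /andP [Sj Pj].
exists (k + j); first by rewrite -leq_subRL.
rewrite addnC -drop_drop Pj andbT in_starE; apply/orP; right; apply/hasP; exists k.
  rewrite mem_iota k0 add1n ltnS size_take.
  case: ifP => // _; by rewrite leq_addl.
by rewrite take_takel ?leq_addl // Xk /= -take_drop.
Qed.

Lemma count_one (T : eqType) (p : pred T) s : uniq s -> (exists2 j, j \in s & p j) ->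
  (forall j1 j2, j1 \in s -> j2 \in s -> p j1 -> p j2 -> j1 = j2) -> count p s = 1.
Proof.
move=> U [j js pj] H.
rewrite -size_filter.
have -> : [seq t <- s | p t] = [:: j].
  have : all (pred1 j) [seq t <- s | p t].
    by apply/allP => t; rewrite mem_filter => /andP [pt ts] /=; apply/eqP; apply: H.
  have : j \in [seq t <- s | p t] by rewrite mem_filter pj.
  have : uniq [seq t <- s | p t] by apply: filter_uniq.
  case: [seq t <- s | p t] => // a [|b l] /=; first by rewrite inE => _ /eqP ->.
  by move=> /andP [] /negP nab _ _ /and3P [/eqP e1 /eqP e2]; case: nab; rewrite e1 e2 inE eqxx.
done.
Qed.


Lemma count_row w i : i <= size w ->
  count (is_parse X w) [seq (i, j) | j <- iota i ((size w).+1 - i)] = no_suffix_in X (take i w).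
Proof.
move=> iw; rewrite count_map.
case NS: (no_suffix_in X (take i w)); last first.
  by rewrite [RHS]/= -(count_pred0 (iota i ((size w).+1 - i))); apply: eq_count => j; rewrite /preim /= /is_parse /= NS.
apply: count_one; first exact: iota_uniq.
  case: (parse_exists (drop i w)) => j; rewrite size_drop => js /andP [Sj Pj].
  exists (i + j).
    by rewrite mem_iota leq_addr /= subnKC ?(leqW iw) // ltnS -(subnKC iw) leq_add2l.
  by rewrite /preim /= /is_parse /= NS /= addnC -take_drop Sj -drop_drop Pj.
move=> j1 j2; rewrite !mem_iota /preim /= /is_parse /= NS /= => /andP [h1 h1'] /andP [h2 h2'].
rewrite subnKC ?(leqW iw) // ?ltnS in h1' h2'.
move=> /andP [S1 P1] /andP [S2 P2].
have : j1 - i = j2 - i.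
  apply: (parse_unique (y := drop i w)).
  - by rewrite size_drop leq_sub2r.
  - by rewrite size_drop leq_sub2r.
  - by rewrite take_drop subnK.
  - by rewrite drop_drop subnK.
  - by rewrite take_drop subnK.
  - by rewrite drop_drop subnK.
by move/(congr1 (addn^~ i)); rewrite !subnK.
Qed.

Lemma delta_char w : delta X w = count (fun i => no_suffix_in X (take i w)) (iota 0 (size w).+1).
Proof.
rewrite /delta /cuts count_flatten -map_comp.
have : forall i, i \in iota 0 (size w).+1 -> i <= size w by move=> i; rewrite mem_iota.
elim: (iota 0 (size w).+1) => //= i l IH H.
rewrite IH; last by move=> k kl; apply: H; rewrite inE kl orbT.
by rewrite count_row // H // inE eqxx.
Qed.

End Parse.



Section Inf.
Variable A : finType.
Variable X : pred (seq A).
Hypothesis Xne : forall u, X u -> u != [::].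
Hypothesis Xpre : forall u v, X u -> X v -> prefix u v -> u = v.
Variable x : nat -> A.

Definition W a l := mkseq (fun k => x (a + k)) l.

Lemma size_W a l : size (W a l) = l.
Proof. by rewrite size_mkseq. Qed.

Lemma nth_W y a l r : r < l -> nth y (W a l) r = x (a + r).
Proof. by move=> h; rewrite nth_mkseq. Qed.

Lemma take_W r a l : r <= l -> take r (W a l) = W a r.
Proof.
move=> h; apply: (@eq_from_nth _ (x 0)); first by rewrite size_take size_W size_W; case: ifP => // /negbT; rewrite -leqNgt => h2; apply/eqP; rewrite eqn_leq h h2.
move=> i; rewrite size_take size_W => hi.
have hi' : i < r by move: hi; case: ifP => // /negbT; rewrite -leqNgt => h2 h3; apply: leq_trans h3 h2.
by rewrite nth_take // !nth_W // (leq_trans hi' h).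
Qed.

Lemma drop_W r a l : drop r (W a l) = W (a + r) (l - r).
Proof.
apply: (@eq_from_nth _ (x 0)); first by rewrite size_drop !size_W.
move=> i; rewrite size_drop size_W => hi.
rewrite nth_drop !nth_W ?addnA //; slia.
Qed.

Lemma W_factor a l : factor x (W a l).
Proof. by exists a; rewrite size_W. Qed.

Lemma W_Xuniq a r1 r2 : X (W a r1) -> X (W a r2) -> r1 = r2.
Proof.
wlog le12 : r1 r2 / r1 <= r2.
  by move=> H H1 H2; case: (leqP r1 r2) => h; [apply: H | symmetry; apply: H => //; apply: ltnW].
move=> H1 H2.
have : W a r1 = W a r2 by apply: Xpre => //; rewrite prefixE size_W take_W.
by move/(congr1 size); rewrite !size_W.
Qed.

Definition NS a t := no_suffix_in X (W a t).
Definition Nb a l := count (NS a) (iota 0 l.+1).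

Lemma NS0 a : NS a 0.
Proof.
rewrite /NS /no_suffix_in /= orbF; apply/negP => h.
by move: (Xne h).
Qed.

Lemma NS_succ a t : NS (a + 1) t -> NS a t.+1 || X (W a t.+1).
Proof.
move=> H; case E: (NS a t.+1) => //=.
move: E; rewrite /NS /no_suffix_in => /negbFE /hasP [k]; rewrite mem_iota add0n => /andP [_ hk].
rewrite drop_W; case: k hk => [|k] hk; first by rewrite addn0 subn0.
move=> Xk; move: H; rewrite /NS /no_suffix_in => /hasPn /(_ k).
rewrite mem_iota add0n size_W; rewrite size_W in hk.
have hk' : k < t.+1 by slia.
move=> /(_ hk'); rewrite drop_W.
by rewrite subSS -add1n addnA in Xk; rewrite Xk.
Qed.

Lemma count_le1 (T : eqType) (p : pred T) s : uniq s ->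
  (forall j1 j2, j1 \in s -> j2 \in s -> p j1 -> p j2 -> j1 = j2) -> count p s <= 1.
Proof.
move=> U H; case E: (has p s); last by rewrite has_count in E; move: E; case: (count p s).
case/hasP: E => j js pj.
have H1 : count p s = 1.
  rewrite -size_filter.
  have : all (pred1 j) [seq t <- s | p t].
    by apply/allP => t; rewrite mem_filter => /andP [pt ts] /=; apply/eqP; apply: H.
  have : j \in [seq t <- s | p t] by rewrite mem_filter pj.
  have : uniq [seq t <- s | p t] by apply: filter_uniq.
  case: [seq t <- s | p t] => // a [|b l] /=; first by rewrite inE => _ /eqP ->.
  by move=> /andP [] /negP nab _ _ /and3P [/eqP e1 /eqP e2]; case: nab; rewrite e1 e2 inE eqxx.
by rewrite H1.
Qed.

Lemma count_Xpre a l : count (fun t => X (W a t.+1)) (iota 0 l.+1) <= 1.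
Proof.
apply: count_le1; first exact: iota_uniq.
by move=> j1 j2 _ _ h1 h2; have := W_Xuniq h1 h2; case.
Qed.

Lemma Nb_split a l : Nb a l.+1 = 1 + count (fun t => NS a t.+1) (iota 0 l.+1).
Proof.
have e := iotaDl 1 0 l.+1; rewrite addn0 in e.
rewrite /Nb (_ : iota 0 l.+2 = 0 :: iota 1 l.+1) // e.
by rewrite [count _ (_ :: _)]/= NS0 count_map.
Qed.

Lemma Nb_le_aux a l : Nb (a + 1) l <= count (fun t => NS a t.+1) (iota 0 l.+1)
   + count (fun t => X (W a t.+1)) (iota 0 l.+1).
Proof.
rewrite /Nb -count_predUI; apply: leq_trans (leq_addr _ _).
by apply: sub_count => t /NS_succ.
Qed.

Lemma Nb_step a l : Nb (a + 1) l <= Nb a l.+1.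
Proof.
apply: leq_trans (Nb_le_aux a l) _; rewrite Nb_split addnC leq_add2r.
exact: count_Xpre.
Qed.

Lemma Nb_step_strict a l : (forall t, ~~ X (W a t.+1)) -> Nb (a + 1) l < Nb a l.+1.
Proof.
move=> H; apply: leq_ltn_trans (Nb_le_aux a l) _; rewrite Nb_split.
have -> : count (fun t => X (W a t.+1)) (iota 0 l.+1) = 0.
  by apply/eqP; rewrite -leqn0 leqNgt -has_count; apply/hasPn => t _; apply: H.
by rewrite addn0 add1n.
Qed.

Lemma Nb_last a l : Nb a l.+1 = Nb a l + NS a l.+1.
Proof. by rewrite /Nb -[l.+2]addn1 iotaD count_cat /= addn0 add0n. Qed.

Lemma Nb_mono a l r : Nb a l <= Nb a (l + r).
Proof.
elim: r => [|r IH]; first by rewrite addn0.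
by rewrite addnS Nb_last (leq_trans IH) ?leq_addr.
Qed.

Lemma Nb_shift a i l : Nb (a + i) l <= Nb a (l + i).
Proof.
elim: i l => [|i IH] l; first by rewrite !addn0.
rewrite addnS -addn1 (leq_trans (Nb_step _ _)) //.
by rewrite addnS -addSn IH.
Qed.

Lemma Nb_pos a l : 0 < Nb a l.
Proof. by rewrite /Nb /= NS0. Qed.

End Inf.



Section Forest.
Variable A : eqType.

Definition edge_ok (Wd : seq (seq A)) (e : seq A * seq A * nat) :=
  [/\ e.1.1 \in Wd, e.1.2 \in Wd, take e.2 e.1.1 = take e.2 e.1.2 & take e.2.+1 e.1.1 != take e.2.+1 e.1.2].

Lemma forest (E : seq (seq A * seq A * nat)) (Wd : seq (seq A)) :
  uniq [seq e.2 | e <- E] -> (forall e, e \in E -> edge_ok Wd e) ->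
  Wd != [::] -> size E < size (undup Wd).
Proof.
have [n] := ubnP (size E); elim: n E Wd => // n IH E Wd HE U H Wne.
case: E HE U H => [|e0 E0] HE U H.
  move: Wne; case: Wd H => // w Wd' _ _; have : w \in undup (w :: Wd') by rewrite mem_undup inE eqxx.
  by case: (undup (w :: Wd')).
set E := e0 :: E0 in HE U H *.
have exP : exists m, has (fun e : seq A * seq A * nat => e.2 == m) E.
  by exists e0.2; rewrite /= eqxx.
case: (ex_minnP exP) => l /hasP [e eE /eqP el] lmin.
case: (H e eE) => uW vW tl tl1.
set u := e.1.1 in uW tl tl1; set v := e.1.2 in vW tl tl1.
rewrite el in tl tl1.
pose p := fun w : seq A => take l.+1 w == take l.+1 u.
set E' := [seq e' <- E | e'.2 != l].
set E1 := [seq e' <- E' | p e'.1.1].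
set E2 := [seq e' <- E' | ~~ p e'.1.1].
have sE : size E = (size E').+1.
  have c1 : count (fun e' : seq A * seq A * nat => e'.2 == l) E = 1.
    have := count_uniq_mem l U; rewrite count_map.
    have -> : l \in [seq e1.2 | e1 <- E] by apply/mapP; exists e.
    by move=> h; rewrite -[1]/(nat_of_bool true) -h; apply: eq_count.
  by rewrite -(count_predC (fun e' : seq A * seq A * nat => e'.2 == l) E) c1 size_filter.
have sE' : size E' = size E1 + size E2 by rewrite -(count_predC (fun e' : seq A * seq A * nat => p e'.1.1) E') !size_filter.
have E'gt : forall e', e' \in E' -> l < e'.2.
  move=> e'; rewrite mem_filter => /andP [ne e'E].
  rewrite ltn_neqAle eq_sym ne /=; apply: lmin; apply/hasP; exists e' => //.
have subE1 : subseq E1 E by apply: subseq_trans (filter_subseq _ _) (filter_subseq _ _).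
have subE2 : subseq E2 E by apply: subseq_trans (filter_subseq _ _) (filter_subseq _ _).
have same : forall e', e' \in E' -> p e'.1.1 = p e'.1.2.
  move=> e' e'E; have := E'gt e' e'E => lt.
  have e'E0 : e' \in E by move: e'E; rewrite mem_filter => /andP [].
  case: (H e' e'E0) => _ _ t' _.
  by rewrite /p -(take_takel _ lt) t' take_takel.
set W1 := [seq w <- Wd | p w].
set W2 := [seq w <- Wd | ~~ p w].
have sW : size (undup Wd) = size (undup W1) + size (undup W2).
  by rewrite -!filter_undup !size_filter count_predC.
have h1 : size E1 < size (undup W1).
  apply: IH.
  - move: HE; rewrite sE sE' ltnS => HE'; exact: leq_ltn_trans (leq_addr _ _) HE'.
  - by apply: subseq_uniq (map_subseq _ subE1) U.
  - move=> e' e'E1; have e'E : e' \in E by apply: (mem_subseq subE1).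
    move: e'E1; rewrite mem_filter => /andP [pe e'E'].
    case: (H e' e'E) => a1 a2 a3 a4; split => //; rewrite mem_filter ?a1 ?a2 ?pe //.
    by rewrite -same // pe.
  - apply/eqP => W10; have : u \in W1 by rewrite mem_filter /p eqxx uW.
    by rewrite W10.
have h2 : size E2 < size (undup W2).
  apply: IH.
  - move: HE; rewrite sE sE' ltnS => HE'; exact: leq_ltn_trans (leq_addl _ _) HE'.
  - by apply: subseq_uniq (map_subseq _ subE2) U.
  - move=> e' e'E2; have e'E : e' \in E by apply: (mem_subseq subE2).
    move: e'E2; rewrite mem_filter => /andP [pe e'E'].
    case: (H e' e'E) => a1 a2 a3 a4; split => //; rewrite mem_filter ?a1 ?a2 ?pe //.
    by rewrite -same // pe.
  - apply/eqP => W20; have : v \in W2.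
      by rewrite mem_filter /p eq_sym tl1 vW.
    by rewrite W20.
rewrite sE sW sE'; move: h1 h2; clearbody E1 E2 W1 W2 => h1 h2; slia.
Qed.
End Forest.



Lemma count_inj (P Q : pred nat) (R : nat -> nat -> bool) s1 s2 : uniq s1 ->
  (forall t, t \in s1 -> P t -> has (fun k => Q k && R t k) s2) ->
  (forall t1 t2 k, t1 \in s1 -> t2 \in s1 -> P t1 -> P t2 -> R t1 k -> R t2 k -> t1 = t2) ->
  count P s1 <= count Q s2.
Proof.
move=> U Hex Hinj.
pose h t := nth 0 s2 (find (fun k => Q k && R t k) s2).
have hP : forall t, t \in s1 -> P t -> [/\ h t \in s2, Q (h t) & R t (h t)].
  move=> t ts Pt; have := Hex t ts Pt => hs.
  have := nth_find 0 hs => /andP [q r]; split => //; apply: mem_nth; by rewrite -has_find.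
rewrite -!size_filter -(size_map h).
apply: uniq_leq_size.
- rewrite map_inj_in_uniq ?filter_uniq // => t1 t2; rewrite !mem_filter => /andP [p1 t1s] /andP [p2 t2s] e.
  case: (hP _ t1s p1) => _ _ r1; case: (hP _ t2s p2) => _ _ r2.
  by apply: (Hinj t1 t2 (h t1)) => //; rewrite e.
- move=> k /mapP [t]; rewrite mem_filter => /andP [pt ts] ->.
  by case: (hP _ ts pt) => a b _; rewrite mem_filter a b.
Qed.

Lemma branch (A : finType) (x : nat -> A) M T : ~ ultimately_periodic x ->
  exists i j, [/\ T <= i, T <= j, (forall r, r < M -> x (i + r) = x (j + r)) & x (i + M) != x (j + M)].
Proof.
move=> NUP; apply: NNPP => NB; apply: NUP.
have H : forall i j, T <= i -> T <= j -> (forall r, r < M -> x (i + r) = x (j + r)) -> x (i + M) = x (j + M).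
  move=> i j Ti Tj Hr; apply/eqP; apply: negbNE; apply/negP => ne.
  by apply: NB; exists i, j; split.
pose K := #|{: M.-tuple A}|.
pose f (k : 'I_K.+1) := [tuple x (T + k + val t) | t < M].
have [k1 [k2 [e12 n12]]] : exists k1 k2, f k1 = f k2 /\ k1 <> k2.
  apply: NNPP => NE; have inj : injective f.
    move=> a b e; apply: NNPP => nab; apply: NE; by exists a, b.
  by have := @leq_card _ _ f inj; rewrite card_ord ltnn.
wlog lt12 : k1 k2 e12 n12 / (k1 < k2)%N.
  move=> Hw; case: (ltngtP k1 k2) => h; first exact: Hw h.
    by apply: (Hw k2 k1) => // e; apply: n12.
  by case: n12; apply: val_inj.
have base : forall r, r < M -> x (T + k1 + r) = x (T + k2 + r).
  move=> r rM; have := congr1 (fun t : M.-tuple A => tnth t (Ordinal rM)) e12.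
  by rewrite /f !tnth_mktuple.
have all_r : forall r, x (T + k1 + r) = x (T + k2 + r).
  move=> r; have [n] := ubnP r; elim: n r => // n IH r rn.
  case: (ltnP r M) => rM; first exact: base.
  have -> : r = (r - M) + M by rewrite subnK.
  rewrite !addnA; apply: H; try (rewrite -!addnA; exact: leq_addr).
  move=> r' r'M; have := IH (r - M + r'); rewrite !addnA; apply; slia.
exists (k2 - k1); split; first by rewrite subn_gt0.
exists (T + k1) => i Ti.
have -> : i = T + k1 + (i - (T + k1)) by rewrite subnKC.
set r := i - (T + k1).
have -> : T + k1 + r + (k2 - k1) = T + k2 + r by move: lt12 => lt12'; slia.
by rewrite all_r.
Qed.



Lemma maxsize_bound (A : eqType) (s : seq (seq A)) w : w \in s -> size w <= foldr (fun u m => maxn (size u) m) 0 s.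
Proof.
elim: s => //= u s IH; rewrite inE => /orP [/eqP -> | h]; first exact: leq_maxl.
exact: leq_trans (IH h) (leq_maxr _ _).
Qed.

Section Main.
Variable A : finType.
Variable X : pred (seq A).
Hypothesis Xne : forall u, X u -> u != [::].
Hypothesis Xpre : forall u v, X u -> X v -> prefix u v -> u = v.
Variable x : nat -> A.
Variable d : nat.
Variable s : seq (seq A).
Hypothesis Hb : forall a l, Nb X x a l <= d.
Hypothesis Hst : forall a, exists a' L, a <= a' /\ Nb X x a' L = d.
Hypothesis Hs : forall w, X w -> factor x w -> w \in s.
Hypothesis Hsd : size s <= d.

Local Notation W := (W x).
Local Notation NS := (NS X x).
Local Notation Nb := (Nb X x).

Lemma e_total a : exists t, X (W a t.+1).
Proof.
apply: NNPP => NE.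
have H : forall t, ~~ X (W a t.+1) by move=> t; apply/negP => h; apply: NE; exists t.
case: (Hst (a + 1)) => a' [L [le e]].
have := Nb_shift Xne Xpre x (a + 1) (a' - (a + 1)) L; rewrite subnKC // e => h1.
have := Nb_step_strict Xne (L + (a' - (a + 1))) H => h2.
have := Hb a (L + (a' - (a + 1))).+1 => h3.
have := leq_ltn_trans h1 (leq_trans h2 h3); by rewrite ltnn.
Qed.

Lemma N_full a : exists L, Nb a L = d.
Proof.
case: (Hst a) => a' [L [le e]].
have := Nb_shift Xne Xpre x a (a' - a) L; rewrite subnKC // e => h1.
exists (L + (a' - a)); apply/eqP; rewrite eqn_leq Hb h1 //.
Qed.

Lemma eventually0 : exists b0, forall c, b0 < c -> ~~ NS 0 c.
Proof.
apply: NNPP => NE.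
have H : forall b, exists c, b < c /\ NS 0 c.
  move=> b; apply: NNPP => nb; apply: NE; exists b => c bc; apply/negP => h; apply: nb; by exists c.
have : forall k, exists b, k <= Nb 0 b.
  elim => [|k [b hb]]; first by exists 0.
  case: (H b) => c [bc hc]; exists c.
  have e : c = (c.-1).+1 by rewrite prednK // (leq_ltn_trans (leq0n b) bc).
  rewrite e Nb_last -e hc addn1 ltnS (leq_trans hb) //.
  have := Nb_mono X x 0 b (c.-1 - b); rewrite subnKC //; by rewrite -ltnS -e.
case/(_ d.+1) => b h; have := leq_trans h (Hb 0 b); by rewrite ltnn.
Qed.

Definition M := foldr (fun u m => maxn (size u) m) 0 s.

Lemma Xlen a l : X (W a l) -> l <= M.
Proof. by move=> h; have := maxsize_bound (Hs h (W_factor x a l)); rewrite size_W. Qed.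

Lemma G_count b0 (Hb0 : forall c, b0 < c -> ~~ NS 0 c) i : b0 <= i ->
  d <= count (fun k => no_prefix_in X (W k (i + M - k))) (iota i M.+1).
Proof.
move=> bi; set n := i + M.
case: (N_full (n + 1)) => L hL.
rewrite -hL /Nb.
apply: (count_inj (R := fun t k => X (W k (n + 1 + t - k)) && (k <= n))).
- exact: iota_uniq.
- move=> t tL NSt; set c := n + 1 + t.
  have : ~~ NS 0 c by apply: Hb0; rewrite /c /n; slia.
  rewrite /NS /no_suffix_in negbK => /hasP [k]; rewrite mem_iota add0n ltnS => /andP [_ kc].
  rewrite drop_W add0n => Xk.
  have kn : k <= n.
    rewrite leqNgt; apply/negP => nk.
    move: NSt; rewrite /NS /no_suffix_in => /hasPn /(_ (k - (n + 1))).
    rewrite mem_iota add0n size_W drop_W.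
    have hh : k - (n + 1) < t.+1 by rewrite size_W /c in kc; slia.
    move=> /(_ hh).
    have -> : n + 1 + (k - (n + 1)) = k by slia.
    have -> : t - (k - (n + 1)) = c - k by rewrite /c; slia.
    by rewrite Xk.
  have cM := Xlen Xk.
  apply/hasP; exists k.
    rewrite mem_iota; rewrite /c /n in cM kn; apply/andP; split; slia.
  rewrite Xk kn !andbT.
  case E: (no_prefix_in X (W k (i + M - k))) => //.
  case: (no_prefixP Xne E) => r /andP [r0]; rewrite size_W => rn.
  rewrite take_W // => Xr.
  have := W_Xuniq Xpre Xr Xk; rewrite /c /n in rn *; slia.
- move=> t1 t2 k _ _ _ _ /andP [X1 k1] /andP [X2 _].
  have := W_Xuniq Xpre X1 X2; slia.
Qed.


Lemma len_spec a : exists l, X (W a l.+1).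
Proof. exact: e_total. Qed.

Definition len a := ex_minn (len_spec a).

Lemma len_X a : X (W a (len a).+1).
Proof. by rewrite /len; case: ex_minnP. Qed.

Lemma core : ~ ultimately_periodic x -> False.
Proof.
move=> NUP.
case: eventually0 => b0 Hb0.
case: (branch M b0 NUP) => i [j [bi bj Hr ne]].
have G := G_count Hb0 bi.
pose Q q := no_prefix_in X (W (i + q) (M - q)).
have GQ : count (fun k => no_prefix_in X (W k (i + M - k))) (iota i M.+1) = count Q (iota 0 M.+1).
  have e := iotaDl i 0 M.+1; rewrite addn0 in e.
  rewrite e count_map; apply: eq_count => q; by rewrite /preim /Q /= subnDl.
pose u q := W (i + q) (len (i + q)).+1.
pose v q := W (j + q) (len (j + q)).+1.
pose E := [seq (u q, v q, M - q) | q <- iota 0 M.+1 & Q q].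
have sE : size E = count Q (iota 0 M.+1) by rewrite size_map size_filter.
have pW : forall q, q <= M -> W (i + q) (M - q) = W (j + q) (M - q).
  move=> q qM; apply: (@eq_from_nth _ (x 0)); first by rewrite !size_W.
  move=> r; rewrite size_W => rq; rewrite !nth_W // -!addnA; apply: Hr; slia.
have := @forest _ E s.
have U : uniq [seq e.2 | e <- E].
  rewrite -map_comp map_inj_in_uniq; first exact: (filter_uniq _ (iota_uniq _ _)).
  move=> q1 q2; rewrite !mem_filter !mem_iota => /andP [_ /andP [_ h1]] /andP [_ /andP [_ h2]] /= e12.
  slia.
move=> /(_ U) H.
have : size E < size (undup s).
  apply: H.
  - move=> e /mapP [q]; rewrite mem_filter mem_iota => /andP [Qq /andP [_ qM]] ->.
    rewrite ltnS in qM.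
    have Xu := len_X (i + q); have Xv := len_X (j + q).
    have ul : M - q < (len (i + q)).+1.
      rewrite ltnNge; apply/negP => h.
      have := no_prefix_take Qq (k := (len (i + q)).+1); rewrite size_W take_W // => /(_ h).
      by rewrite Xu.
    have vl : M - q < (len (j + q)).+1.
      rewrite ltnNge; apply/negP => h.
      have Qq' : no_prefix_in X (W (j + q) (M - q)) by rewrite -pW.
      have := no_prefix_take Qq' (k := (len (j + q)).+1); rewrite size_W take_W // => /(_ h).
      by rewrite Xv.
    split.
    + exact: Hs Xu (W_factor x _ _).
    + exact: Hs Xv (W_factor x _ _).
    + change (take (M - q) (u q) = take (M - q) (v q)).
      by rewrite /u /v !take_W ?pW // ltnW.
    + change (take (M - q).+1 (u q) != take (M - q).+1 (v q)).
      rewrite /u /v !take_W //; apply/negP => /eqP ee.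
      have := congr1 (nth (x 0) ^~ (M - q)) ee; rewrite !nth_W // -!addnA subnKC //.
      by move=> e'; move: ne; rewrite e' eqxx.
  - apply/eqP => s0; have := Hs (len_X 0) (W_factor x _ _); by rewrite s0.
move=> h; have := leq_trans h (leq_trans (size_undup s) Hsd).
by rewrite sE -GQ ltnNge G.
Qed.

End Main.

Unset Implicit Arguments. Set Strict Implicit.

Theorem mainTheorem13 (A : finType) (X : pred (seq A)) (x : nat -> A) :
  maximal_bifix_code X -> thin X -> stable X x ->
  (exists d, is_dF (factor x) X d /\ card_le (fun w => X w /\ factor x w) d) ->
  ultimately_periodic x.
Proof.
move=> [[Xne [Xpre _]] _] _ Hstab [d [[Hex Hbd] [s [Hsd Hs]]]].
have dW : forall a l, delta X (W x a l) = Nb X x a l.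
  move=> a l; rewrite (delta_char Xne Xpre) size_W /Nb; apply: eq_in_count => t.
  by rewrite mem_iota add0n ltnS => /andP [_ h]; rewrite take_W.
apply: NNPP; apply: (@core A X Xne Xpre x d s).
- by move=> a l; rewrite -dW; apply: Hbd; apply: W_factor.
- move=> a; have [[w [[i' ew] dw]] _] := (proj2 (Hstab a d)) (conj Hex Hbd).
  exists (a + i'), (size w); split; first exact: leq_addr.
  rewrite -dW -dw ew size_mkseq; congr (delta X _); apply: eq_mkseq => k.
  by rewrite /shift addnA.
- by move=> w Xw fw; apply: Hs.
- exact: Hsd.
Qed.
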